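(* Let $U=(u_1,\dots,u_d)$ be an orthonormal basis of $\mathbb{R}^d$, $d\ge2$, and let $x\in\mathbb{R}^d$ be random with two distinct indices $i,j$ chosen uniformly at random, $x_i,x_j$ independent uniform random signs $\pm1$, and $x_k=0$ otherwise; let $y=Ux$. Then $U$ is not a local maximum of $\max_{\Psi\in\mathcal D}\mathbb{E}_y\|\Psi^\star y\|_\infty^2$: for $U_\varepsilon=(u_1,\dots,u_{d-1},(u_d+\varepsilon u_1)/\sqrt{1+\varepsilon^2})$ and every $\varepsilon>0$ one has $\mathbb{E}_y\|U_\varepsilon^\star y\|_\infty^2>\mathbb{E}_y\|U^\star y\|_\infty^2=1$.
   Context: $\mathcal D$ is the set of $d\times d$ matrices with unit-norm columns; $\|\cdot\|_\infty$ is the maximum absolute entry. *)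

(* Defs.v *)
From HB Require Import structures.
From mathcomp Require Import all_boot all_order all_algebra.
Set Implicit Arguments. Unset Strict Implicit. Unset Printing Implicit Defensive.
Import Order.TTheory GRing.Theory Num.Theory.
Local Open Scope ring_scope.

Definition orthonormal_mx (R : rcfType) (d : nat) (U : 'M[R]_d) : Prop :=
  U^T *m U = 1%:M.

Definition unit_cols (R : rcfType) (d : nat) (A : 'M[R]_d) : Prop :=
  forall j : 'I_d, \sum_(i < d) (A i j) ^+ 2 = 1.

Definition normInf (R : rcfType) (d : nat) (v : 'cV[R]_d) : R :=
  \big[Num.max/0]_(k < d) `|v k 0|.

Definition sgnb (R : rcfType) (b : bool) : R := if b then 1 else -1.

Definition xvec (R : rcfType) (d : nat) (i j : 'I_d) (s t : bool) : 'cV[R]_d :=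
  \col_k (if k == i then sgnb R s else if k == j then sgnb R t else 0).

(* E_y || Psi^* y ||_inf^2 with y = U x, x as in the statement:
   (i,j) uniform among ordered pairs of distinct indices (equivalently,
   a uniform unordered pair), s,t independent uniform signs. *)
Definition objective (R : rcfType) (d : nat) (U Psi : 'M[R]_d) : R :=
  (\sum_(i < d) \sum_(j < d | j != i) \sum_(s : bool) \sum_(t : bool)
      normInf (Psi^T *m (U *m xvec R i j s t)) ^+ 2)
  / (d * (d - 1) * 4)%:R.

(* U_eps = (u_1, ..., u_{d-1}, (u_d + eps u_1)/sqrt(1+eps^2)), d = n.+2 *)
Definition Ueps (R : rcfType) (n : nat) (U : 'M[R]_n.+2) (eps : R) : 'M[R]_n.+2 :=
  \matrix_(k, l) (if l == ord_max
                  then (U k ord_max + eps * U k ord0) / Num.sqrt (1 + eps ^+ 2)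
                  else U k l).

(* Main.v *)
Require Import Defs.
From HB Require Import structures.
From mathcomp Require Import all_boot all_order all_algebra.
From mathcomp Require Import lra ring.
Import Order.TTheory GRing.Theory Num.Theory.
Local Open Scope ring_scope.

Lemma normInf_ge {R : rcfType} {d} (v : 'cV[R]_d) k : `|v k 0| <= normInf v.
Proof. by rewrite /normInf (bigD1 k) //= le_max lexx. Qed.

Lemma normInf_le {R : rcfType} {d} (v : 'cV[R]_d) c :
  0 <= c -> (forall k, `|v k 0| <= c) -> normInf v <= c.
Proof.
move=> hc hk; rewrite /normInf; elim/big_ind: _ => // x y hx hy.
by rewrite ge_max hx hy.
Qed.

Lemma norm_sgnb (R : rcfType) b : `|sgnb R b| = 1.
Proof. by case: b; rewrite /sgnb ?normrN normr1. Qed.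

Lemma normInf_xvec (R : rcfType) d (i j : 'I_d) s t :
  i != j -> normInf (xvec R i j s t) = 1.
Proof.
move=> hij; apply: le_anti; apply/andP; split.
  apply: normInf_le => // k; rewrite mxE.
  case: (k == i); first by rewrite norm_sgnb.
  case: (k == j); first by rewrite norm_sgnb.
  by rewrite normr0.
by have := normInf_ge (xvec R i j s t) i; rewrite mxE eqxx norm_sgnb.
Qed.

Lemma normInf_ge0 {R : rcfType} {d} (v : 'cV[R]_d) : 0 <= normInf v.
Proof.
rewrite /normInf; elim/big_ind: _ => //.
by move=> x y hx hy; rewrite le_max hx.
Qed.

Lemma sq_ge (R : rcfType) (a N : R) : 0 <= N -> `|a| <= N -> a ^+ 2 <= N ^+ 2.
Proof.
move=> hN ha; rewrite -real_normK ?num_real //.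
by apply: lerXn2r; rewrite ?nnegrE ?normr_ge0.
Qed.

Lemma sum_lt_at (R : numDomainType) (I : finType) (P : pred I) (F G : I -> R) i0 :
  P i0 -> (forall i, P i -> F i <= G i) -> F i0 < G i0 ->
  \sum_(i | P i) F i < \sum_(i | P i) G i.
Proof.
move=> Pi0 hle hlt. rewrite (bigD1 i0) //= [X in _ < X](bigD1 i0) //=.
apply: ltr_leD => //. apply: ler_sum => i /andP[Pi _]; exact: hle.
Qed.

Lemma sum_delta (R : rcfType) d (F : 'I_d -> R) k :
  \sum_m (k == m)%:R * F m = F k.
Proof.
rewrite (bigD1 k) //= eqxx mul1r big1 ?addr0 // => m hm.
by rewrite eq_sym (negbTE hm) mul0r.
Qed.

Theorem mainTheorem8 (R : rcfType) (n : nat) (U : 'M[R]_n.+2)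
  (hU : orthonormal_mx U) :
  objective U U = 1 /\
  (forall eps : R, 0 < eps ->
     unit_cols (Ueps U eps) /\ objective U U < objective U (Ueps U eps)).
Proof.
have hG : forall a b, \sum_k U k a * U k b = (a == b)%:R.
  move=> a b; have := congr1 (fun M : 'M[R]_n.+2 => M a b) hU; rewrite !mxE.
  by move=> <-; apply: eq_bigr => k _; rewrite mxE.
have hSU : \sum_(i < n.+2) \sum_(j < n.+2 | j != i) \sum_(s : bool) \sum_(t : bool)
      normInf (U^T *m (U *m xvec R i j s t)) ^+ 2 = (n.+2 * (n.+2 - 1) * 4)%:R.
  transitivity (\sum_(i < n.+2) \sum_(j < n.+2 | j != i) (4 : R)).
    apply: eq_bigr => i _; apply: eq_bigr => j hj.
    rewrite !big_bool /= !mulmxA !hU !mul1mx !normInf_xvec 1?eq_sym // expr1n.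
    lra.
  under eq_bigr do rewrite sumr_const cardC1 card_ord.
  rewrite sumr_const card_ord -mulrnA -[_ *+ _]mulr_natr !natrM subn1 /=.
  ring.
have hD : (n.+2 * (n.+2 - 1) * 4)%:R != 0 :> R by rewrite pnatr_eq0 subn1.
have hA : objective U U = 1 by rewrite /objective hSU divff.
split => // eps heps.
set s := Num.sqrt (1 + eps ^+ 2).
have hpos : 0 < 1 + eps ^+ 2 by rewrite ltr_pwDl // sqr_ge0.
have hs : 0 < s by rewrite sqrtr_gt0.
have hs2 : s ^+ 2 = 1 + eps ^+ 2 by rewrite sqr_sqrtr // ltW.
have hmax0 : (ord_max : 'I_n.+2) != ord0 by [].
set M := Ueps U eps.
split.
  move=> j; rewrite /M; under eq_bigr do rewrite mxE.
  rewrite -/s; case: (j == ord_max); last first.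
    by under eq_bigr do rewrite expr2; rewrite hG eqxx.
  under eq_bigr do rewrite expr_div_n hs2 sqrrD.
  rewrite -mulr_suml !big_split /=.
  under eq_bigr do rewrite expr2.
  under [X in _ + X]eq_bigr do rewrite exprMn expr2.
  under [in X in _ + X + _]eq_bigr do rewrite mulrCA.
  under [X in _ + X]eq_bigr do rewrite -mulrA.
  rewrite -!mulr_sumr !hG eqxx (negbTE hmax0) mulr0 !addr0 !mulr1 -expr2.
  by rewrite divff // gt_eqF.
have rowN : forall k m, k != ord_max -> (M^T *m U) k m = (k == m)%:R.
  move=> k m hk; rewrite !mxE -hG; apply: eq_bigr => l _.
  by rewrite !mxE (negbTE hk).
have rowX : forall m, (M^T *m U) ord_max m
    = ((ord_max == m)%:R + eps * (ord0 == m)%:R) / s.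
  move=> m; rewrite !mxE -!hG.
  under eq_bigr do rewrite !mxE eqxx -/s mulrAC mulrDl -mulrA.
  by rewrite -mulr_suml big_split /= -mulr_sumr.
have entN : forall x : 'cV[R]_n.+2, forall k, k != ord_max ->
    (M^T *m (U *m x)) k 0 = x k 0.
  move=> x k hk; rewrite mulmxA mxE.
  under eq_bigr do rewrite rowN //.
  exact: sum_delta.
have entX : forall x : 'cV[R]_n.+2,
    (M^T *m (U *m x)) ord_max 0 = (x ord_max 0 + eps * x ord0 0) / s.
  move=> x; rewrite mulmxA mxE.
  under eq_bigr do rewrite rowX mulrAC mulrDl -mulrA.
  by rewrite -mulr_suml big_split /= -mulr_sumr !sum_delta.
have lb : forall i j b1 b2, j != i ->
    1 <= normInf (M^T *m (U *m xvec R i j b1 b2)) ^+ 2.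
  move=> i j b1 b2 hji; apply: exprn_ege1.
  case: (eqVneq i ord_max) => hi.
    have hj : j != ord_max by rewrite hi in hji.
    have := normInf_ge (M^T *m (U *m xvec R i j b1 b2)) j.
    by rewrite entN // mxE (negbTE hji) eqxx norm_sgnb.
  have := normInf_ge (M^T *m (U *m xvec R i j b1 b2)) i.
  by rewrite entN // mxE eqxx norm_sgnb.
have strict : 1 < normInf (M^T *m (U *m xvec R ord0 ord_max true true)) ^+ 2.
  set v := M^T *m _.
  have h1 := normInf_ge v ord_max.
  rewrite /v entX !mxE eqxx /= ?(negbTE hmax0) /sgnb mulr1 in h1.
  apply: (lt_le_trans _ (@sq_ge _ _ _ (normInf_ge0 _) h1)).
  rewrite expr_div_n hs2 ltr_pdivlMr // mul1r sqrrD expr1n.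
  lra.
have e1 : forall i j b1 b2, j != i ->
    normInf (U^T *m (U *m xvec R i j b1 b2)) ^+ 2 = 1.
  by move=> i j b1 b2 hji; rewrite mulmxA hU mul1mx normInf_xvec 1?eq_sym // expr1n.
rewrite hA /objective ltr_pdivlMr; last by rewrite ltr0n subn1.
rewrite mul1r -hSU.
apply: (@sum_lt_at _ _ _ _ _ ord0) => // [i _|].
  apply: ler_sum => j hj; apply: ler_sum => b1 _; apply: ler_sum => b2 _.
  by rewrite e1 // lb.
apply: (@sum_lt_at _ _ _ _ _ ord_max) => // [j hj|].
  apply: ler_sum => b1 _; apply: ler_sum => b2 _.
  by rewrite e1 // lb.
apply: (@sum_lt_at _ _ _ _ _ true) => // [b1 _|].
  apply: ler_sum => b2 _; by rewrite e1 // lb.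
apply: (@sum_lt_at _ _ _ _ _ true) => // [b2 _|].
  by rewrite e1 // lb.
by rewrite e1.
Qed.
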